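(* Let $d\in\mathbb{N}$, $N=d$, $\mathcal{N}=\{1,\dots,d\}$, and consider the switched system $x(t+1)=A_{\nu(t)}x(t)+b_{\nu(t)}\mu(t)$ with state set $\mathcal{X}=\mathbb{R}^d$ and set of admissible continuous controls $\mathcal{U}=\mathbb{R}$. Suppose each $A_i$, $i\in\mathcal{N}$, is a diagonal matrix with all diagonal entries nonzero, and each $b_i\in\mathbb{R}^d$ has its $i$-th entry nonzero and all other entries zero. Define $\mathcal{X}_0=\{0_d\}$, $\mathcal{X}_j=\{x\in\mathbb{R}^d: x_j\neq0,\ x_i=0 \text{ for all } i\neq j\}$ for $j=1,\dots,d$, and $\mathcal{X}_{d+1}=\mathbb{R}^d\setminus\bigcup_{j=0}^d\mathcal{X}_j$. Then $(\mathcal{X}_j)_{j=0}^{d+1}$ is a state-space abstraction of this switched system.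
   Context: A family $(\mathcal{X}_j)_{j=0}^n$ of subsets of $\mathcal{X}$ is a state-space abstraction of the switched system with subsystems $(A_i,b_i)$, $i\in\mathcal{N}$, and admissible continuous control set $\mathcal{U}$ if: (i) $\mathcal{X}_0=\{0_d\}$; (ii) the $\mathcal{X}_j$ are pairwise disjoint; (iii) $\bigcup_{j=0}^n\mathcal{X}_j=\mathcal{X}$; (iv) for each $j\in\{1,\dots,n\}$ and $i\in\mathcal{N}$ there is $k\in\{0,\dots,n\}$ with $A_ix\in\mathcal{X}_k$ for all $x\in\mathcal{X}_j$; (v) for each $j\in\{1,\dots,n\}$ and $i\in\mathcal{N}$ there is $\ell\in\{0,\dots,n\}$ such that for every $x\in\mathcal{X}_j$, $A_ix+b_i\mu(x)\in\mathcal{X}_\ell$ for some $\mu(x)\in\mathcal{U}\setminus\{0\}$. *)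

(* Defs.v *)
From HB Require Import structures.
From mathcomp Require Import all_boot all_order all_algebra.
From mathcomp Require Import reals.
Set Implicit Arguments. Unset Strict Implicit. Unset Printing Implicit Defensive.
Import Order.TTheory GRing.Theory Num.Theory.
Local Open Scope ring_scope.

(* State space R^d = column vectors 'cV[R]_d; subsets are predicates.
   Modes are indexed by a finite type I; the family (X_j)_{j=0}^n is
   indexed by 'I_n.+1, index ord0 playing the role of X_0. *)
Definition state_space_abstraction (R : realType) (d : nat) (I : finType)
  (A : I -> 'M[R]_d) (b : I -> 'cV[R]_d) (Xs : 'cV[R]_d -> Prop)
  (U : R -> Prop) (n : nat) (X : 'I_n.+1 -> 'cV[R]_d -> Prop) : Prop :=
  (forall x, X ord0 x <-> x = 0) /\
  (forall j k : 'I_n.+1, j != k -> forall x, ~ (X j x /\ X k x)) /\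
  (forall x, (exists j, X j x) <-> Xs x) /\
  (forall j : 'I_n.+1, j != ord0 -> forall i : I,
     exists k : 'I_n.+1, forall x, X j x -> X k (A i *m x)) /\
  (forall j : 'I_n.+1, j != ord0 -> forall i : I,
     exists l : 'I_n.+1, forall x, X j x ->
       exists mu, U mu /\ mu != 0 /\ X l (A i *m x + mu *: b i)).

Definition on_axis (R : realType) (d : nat) (k : 'I_d) (x : 'cV[R]_d) : Prop :=
  x k 0 != 0 /\ forall i : 'I_d, i != k -> x i 0 = 0.

(* The family X_0, X_1, ..., X_d, X_{d+1}; X_j (1 <= j <= d) is the
   axis of coordinate j (0-based coordinate j-1). *)
Definition axis_family (R : realType) (d : nat) (j : 'I_d.+2) (x : 'cV[R]_d) : Prop :=
  if val j == 0%N then x = 0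
  else if (val j <= d)%N then exists k : 'I_d, val j = k.+1 /\ on_axis k x
  else ~ (x = 0 \/ exists k : 'I_d, on_axis k x).

(* Main.v *)
Require Import Defs.
From HB Require Import structures.
From mathcomp Require Import all_boot all_order all_algebra.
From mathcomp Require Import reals.
From Stdlib Require Import Classical.
Import Order.TTheory GRing.Theory Num.Theory.
Local Open Scope ring_scope.

Section S.
Context {R : realType} {d : nat}.

Lemma diag_mul (M : 'M[R]_d) (x : 'cV[R]_d) k :
  is_diag_mx M -> (M *m x) k 0 = M k k * x k 0.
Proof.
move=> /is_diag_mxP H; rewrite mxE (bigD1 k) //= big1 ?addr0 // => j hj.
by rewrite H ?mulr0 ?mul0r // eq_sym.
Qed.

Lemma zero_iff (x : 'cV[R]_d) : x = 0 <-> forall k, x k 0 = 0.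
Proof.
split=> [-> k|H]; first by rewrite mxE.
by apply/matrixP => i j; rewrite ord1 H mxE.
Qed.

Lemma pat_zero (x y : 'cV[R]_d) : (forall k, (y k 0 == 0) = (x k 0 == 0)) ->
  x = 0 -> y = 0.
Proof.
move=> H /zero_iff hx; apply/zero_iff => k; apply/eqP; rewrite H hx //.
Qed.

Lemma pat_axis (x y : 'cV[R]_d) k : (forall k, (y k 0 == 0) = (x k 0 == 0)) ->
  on_axis k x -> on_axis k y.
Proof.
move=> H [h1 h2]; split; first by rewrite H.
by move=> i /h2 /eqP; rewrite -H => /eqP.
Qed.

Lemma pat_fam (x y : 'cV[R]_d) j : (forall k, (y k 0 == 0) = (x k 0 == 0)) ->
  axis_family j x -> axis_family j y.
Proof.
move=> H; have H' : forall k, (x k 0 == 0) = (y k 0 == 0) by move=> k; rewrite H.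
rewrite /axis_family; case: ifP => _; first exact: pat_zero.
case: ifP => _.
  by move=> [k [hk ha]]; exists k; split => //; apply: pat_axis ha.
move=> hn [hz|[k hk]]; apply: hn; [left; exact: pat_zero hz|].
by right; exists k; apply: pat_axis hk.
Qed.

Lemma two_nz (x : 'cV[R]_d) : ~ (x = 0 \/ exists k, on_axis k x) ->
  exists p q : 'I_d, [/\ p != q, x p 0 != 0 & x q 0 != 0].
Proof.
move=> hn.
have [p hp] : exists p, x p 0 != 0.
  case: (boolP [exists p, x p 0 != 0]) => [/existsP //|]; rewrite negb_exists => /forallP hall; case: hn; left.
  by apply/zero_iff => k; apply/eqP; move: (hall k); rewrite negbK.
have [q hq] : exists q, (q != p) && (x q 0 != 0).
  case: (boolP [exists q, (q != p) && (x q 0 != 0)]) => [/existsP //|]; rewrite negb_exists => /forallP hall; case: hn; right; exists p.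
  split => // i hi; apply/eqP; move: (hall i); rewrite negb_and hi /= negbK.
  by [].
move/andP: hq => [hq1 hq2]; exists p, q; split => //; by rewrite eq_sym.
Qed.

Lemma fam_max (y : 'cV[R]_d) p q : p != q -> y p 0 != 0 -> y q 0 != 0 ->
  axis_family ord_max y.
Proof.
move=> hpq hp hq; rewrite /axis_family /= ltnn /=.
move=> [hz|[k [hk1 hk2]]]; first by move: hp; rewrite hz mxE eqxx.
case: (eqVneq p k) => [epk|npk]; last by move: hp; rewrite hk2 ?eqxx.
subst; move: hq; rewrite hk2 ?eqxx //; by rewrite eq_sym.
Qed.

Lemma fam_axis (x : 'cV[R]_d) (k : 'I_d) :
  on_axis k x -> axis_family (inord k.+1 : 'I_d.+2) x.
Proof.
move=> h; have e : nat_of_ord (inord k.+1 : 'I_d.+2) = k.+1.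
  by rewrite inordK // !ltnS ltnW.
rewrite /axis_family /= e /= ltn_ord; by exists k.
Qed.

Lemma fam_cases (x : 'cV[R]_d) j : axis_family j x ->
  (x = 0 /\ val j = 0%N) \/ (exists k : 'I_d, on_axis k x /\ val j = k.+1) \/
  (~ (x = 0 \/ exists k, on_axis k x) /\ val j = d.+1).
Proof.
rewrite /axis_family; case: eqP => [->|hj0]; first by left.
case: ifP => hjd; first by move=> [k [hk ha]]; right; left; exists k.
move=> hn; right; right; split => //; apply/eqP; rewrite eqn_leq -ltnS ltn_ord /=.
by rewrite ltnNge hjd.
Qed.

Lemma fam_uniq (x : 'cV[R]_d) j k : axis_family j x -> axis_family k x -> j = k.
Proof.
move=> /fam_cases hj /fam_cases hk; apply: val_inj.
have ax0 : forall p, on_axis p x -> x <> 0.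
  by move=> p [hp _] hx; move: hp; rewrite hx mxE eqxx.
case: hj => [[hx ->]|[[p [hp ->]]|[hn ->]]];
case: hk => [[hx' ->]|[[q [hq ->]]|[hn' ->]]] => //.
- by case: (ax0 _ hq).
- by case: hn'; left.
- by case: (ax0 _ hp).
- case: (eqVneq p q) => [->//|npq].
  by case: hp => hp _; case: hq => _ /(_ _ npq) hq; move: hp; rewrite hq eqxx.
- by case: hn'; right; exists p.
- by case: hn; left.
- by case: hn; right; exists q.
Qed.

Lemma entry (M : 'M[R]_d) (x b : 'cV[R]_d) mu m : is_diag_mx M ->
  (M *m x + mu *: b) m 0 = M m m * x m 0 + mu * b m 0.
Proof. by move=> hM; rewrite [LHS]mxE diag_mul // [X in _ + X]mxE. Qed.
End S.

Theorem proposition1 (R : realType) (d : nat)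
  (A : 'I_d -> 'M[R]_d) (b : 'I_d -> 'cV[R]_d)
  (hAdiag : forall i, is_diag_mx (A i))
  (hAnz : forall i k, A i k k != 0)
  (hbi : forall i, b i i 0 != 0)
  (hbo : forall i k, k != i -> b i k 0 = 0) :
  state_space_abstraction A b (fun _ => True) (fun _ => True)
    (@axis_family R d).
Proof.
split; first by move=> x; rewrite /axis_family /=.
split.
  by move=> j k hjk x [hj hk]; move: hjk; rewrite (fam_uniq _ _ _ hj hk) eqxx.
split.
  move=> x; split => // _.
  case: (eqVneq x 0) => [->|hx0]; first by exists ord0.
  case: (classic (exists k, on_axis k x)) => [[k hk]|hn].
    by exists (inord k.+1); apply: fam_axis.
  exists ord_max; rewrite /axis_family /= ltnn /=.
  by case => // /eqP; rewrite (negbTE hx0).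
split.
  move=> j _ i; exists j => x hx; apply: pat_fam hx => k.
  by rewrite diag_mul // mulf_eq0 (negbTE (hAnz i k)).
move=> j hj i.
have hjn0 : val j <> 0%N by move=> e; move: hj; rewrite (_ : j = ord0) ?eqxx //; apply: val_inj.
case: (ltnP d (val j)) => hjd.
  exists ord_max => x hx.
  have [hn _] : ~ (x = 0 \/ exists k, on_axis k x) /\ val j = d.+1.
    case: (fam_cases _ _ hx) => [[_ //]|[[k [_ hk]]|//]].
    by move: hjd; rewrite hk ltnNge ltn_ord.
  have [p [q [hpq hp hq]]] := two_nz _ hn.
  set a := (A i *m x) i 0.
  exists (if a + b i i 0 == 0 then 2 else 1); split => //; split.
    by case: ifP => _; rewrite ?oner_eq0 ?pnatr_eq0.
  have hyi : (A i *m x + (if a + b i i 0 == 0 then 2 else 1) *: b i) i 0 != 0.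
    rewrite entry // -diag_mul // -/a; case: ifP => h.
      by rewrite mulr2n mulrDl mul1r addrA (eqP h) add0r.
    by rewrite mul1r h.
  set r := if p == i then q else p.
  have hri : r != i.
    by rewrite /r; case: (eqVneq p i) => [epi|//]; rewrite -epi eq_sym.
  apply: (fam_max _ r i) => //.
  rewrite entry // (hbo i r hri) mulr0 addr0 mulf_neq0 //.
  by rewrite /r; case: ifP.
have hk0 : ((val j).-1 < d)%N by rewrite prednK // lt0n; apply/eqP.
set k0 : 'I_d := Ordinal hk0.
have hxk : forall x : 'cV[R]_d, axis_family j x -> on_axis k0 x.
  move=> x hx; case: (fam_cases _ _ hx) => [[_ //]|[[k [hk e]]|[_ e]]].
    suff -> : k0 = k by [].
    by apply: val_inj; rewrite /= e.
  by move: hjd; rewrite e ltnn.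
case: (eqVneq k0 i) => [ek|nk].
  exists ord0 => x /hxk [hx1 hx2].
  set a := (A i *m x) i 0.
  have ha : a != 0 by rewrite /a diag_mul // mulf_neq0 // -ek.
  exists (- a / b i i 0); split => //; split.
    by rewrite mulf_neq0 ?oppr_eq0 ?invr_eq0.
  rewrite /axis_family /=; apply/zero_iff => m; rewrite entry //.
  case: (eqVneq m i) => [->|nm].
    by rewrite -diag_mul // -/a mulrVK ?unitfE // subrr.
  by rewrite (hbo i m nm) mulr0 addr0 hx2 ?mulr0 // ek.
exists ord_max => x /hxk [hx1 hx2].
exists 1; split => //; split; first exact: oner_neq0.
apply: (fam_max _ k0 i) => //.
  by rewrite entry // hbo // mulr0 addr0 mulf_neq0.
have hik : i != k0 by rewrite eq_sym.
by rewrite entry // (hx2 i hik) mulr0 add0r mul1r.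
Qed.
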